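(* For $\alpha>1$ let $X_\alpha$ be a Pareto random variable with $\mathbb P(X_\alpha>x)=(x/x_{\min})^{-\alpha}$ for $x\ge x_{\min}$, where $x_{\min}=x_{\min}(\alpha)>0$ (e.g. $x_{\min}=(\alpha-1)/\alpha$, so that $\mathbb E[X_\alpha]=1$). Then for every $q\in(0,1)$: (i) $\kappa_q(X_\alpha)=q^{\frac{\alpha-1}{\alpha}}$, independently of $x_{\min}$; (ii) the map $\alpha\mapsto \kappa_q(X_\alpha)$ is strictly convex on $(1,\infty)$; (iii) consequently, if $\alpha_1,\dots,\alpha_m>1$, $\omega_1,\dots,\omega_m>0$ with $\sum_i\omega_i=1$, $\bar\alpha=\sum_{i=1}^m\omega_i\alpha_i$, the $X_{\alpha_i}$ are normalized so that $\mathbb E[X_{\alpha_i}]=1$ for all $i$, and $X$ has the mixture distribution $\sum_{i=1}^m\omega_i\,\mathrm{Law}(X_{\alpha_i})$, then $$\kappa_q(X)\ \ge\ \sum_{i=1}^m\omega_i\,\kappa_q(X_{\alpha_i})\ \ge\ \kappa_q(X_{\bar\alpha}).$$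
   Context: For a positive random variable $Y$ with continuous distribution and finite mean, and $q\in(0,1)$, the exceedance threshold is $h_Y(q)=\inf\{h\ge 0:\ \mathbb P(Y>h)\le q\}$ and the (theoretical) quantile contribution is $$\kappa_q(Y)=q\,\frac{\mathbb E[Y\mid Y>h_Y(q)]}{\mathbb E[Y]}=\frac{\mathbb E[Y\mathbf 1_{Y>h_Y(q)}]}{\mathbb E[Y]}.$$ *)

(* Defs.v *)
From Stdlib Require Import Reals Lra ClassicalEpsilon.
Open Scope R_scope.

Fixpoint sumN (m : nat) (f : nat -> R) : R :=
  match m with
  | O => 0
  | S k => sumN k f + f k
  end.

Definition improper_int (f : R -> R) (a l : R) : Prop :=
  (forall b, a <= b -> inhabited (Riemann_integrable f a b)) /\
  (forall eps, 0 < eps -> exists M, forall b (pr : Riemann_integrable f a b),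
      a <= b -> M <= b -> Rabs (RiemannInt pr - l) < eps).

(* A positive random variable Y with continuous law is represented by its density
   f (on (0,oo)).  P(Y > h) = \int_h^\infty f.
   Exceedance threshold h_Y(q) = inf { h >= 0 : P(Y > h) <= q }. *)
Definition exceed_set (f : R -> R) (q : R) (h : R) : Prop :=
  0 <= h /\ exists p, improper_int f h p /\ p <= q.

Definition is_threshold (f : R -> R) (q h : R) : Prop :=
  (forall x, exceed_set f q x -> h <= x) /\
  (forall l, (forall x, exceed_set f q x -> l <= x) -> l <= h) /\
  (exists x, exceed_set f q x).

(* kappa_q(Y) = E[Y 1_{Y > h_Y(q)}] / E[Y], with E[Y] finite and positive. *)
Definition is_kappa (f : R -> R) (q k : R) : Prop :=
  exists h m t,
    is_threshold f q h /\
    improper_int (fun y => y * f y) 0 m /\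
    improper_int (fun y => y * f y) h t /\
    0 < m /\ k = t / m.

(* The (unique, when it exists) quantile contribution, chosen by epsilon. *)
Definition kappa (f : R -> R) (q : R) : R :=
  epsilon (inhabits 0) (fun k => is_kappa f q k).

(* Pareto density with index alpha and scale xmin:
   P(X > x) = (x/xmin)^(-alpha) for x >= xmin. *)
Definition pareto_density (alpha xmin : R) (x : R) : R :=
  if Rle_dec xmin x then alpha * Rpower xmin alpha * Rpower x (- (alpha + 1)) else 0.

(* Normalized scale xmin = (alpha-1)/alpha so that E[X_alpha] = 1. *)
Definition xmin_norm (alpha : R) : R := (alpha - 1) / alpha.

Definition mixture_density (m : nat) (w alpha : nat -> R) (x : R) : R :=
  sumN m (fun i => w i * pareto_density (alpha i) (xmin_norm (alpha i)) x).

(* Main.v *)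
Require Import Defs.
From Stdlib Require Import Reals.
From Stdlib Require Import Lra Lia ClassicalEpsilon FunctionalExtensionality.
From Coquelicot Require Import Coquelicot.
Open Scope R_scope.

Lemma improper_of (f : R -> R) a (F : R -> R) L :
  (forall b, a <= b -> is_RInt f a b (F b)) ->
  (forall eps, 0 < eps -> exists M, forall b, M <= b -> Rabs (F b - L) < eps) ->
  improper_int f a L.
Proof.
  intros HI HL. split.
  - intros b Hb. constructor. apply ex_RInt_Reals_0. eexists; apply HI; auto.
  - intros eps He. destruct (HL eps He) as [M HM]. exists M. intros b pr Hab HMb.
    rewrite <- RInt_Reals. rewrite (is_RInt_unique _ _ _ _ (HI b Hab)). auto.
Qed.

Lemma improper_unique f a l1 l2 : improper_int f a l1 -> improper_int f a l2 -> l1 = l2.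
Proof.
  intros [H1 L1] [_ L2].
  destruct (Req_dec l1 l2) as [e|ne]; auto. exfalso.
  set (eps := Rabs (l1 - l2) / 2).
  assert (He : 0 < eps) by (unfold eps; assert (l1 - l2 <> 0) by lra; apply Rabs_pos_lt in H; lra).
  destruct (L1 eps He) as [M1 HM1]. destruct (L2 eps He) as [M2 HM2].
  set (b := Rmax a (Rmax M1 M2)).
  assert (Hab : a <= b) by apply Rmax_l.
  assert (HM1b : M1 <= b) by (unfold b; eapply Rle_trans; [apply Rmax_l|apply Rmax_r]).
  assert (HM2b : M2 <= b) by (unfold b; eapply Rle_trans; [apply Rmax_r|apply Rmax_r]).
  destruct (H1 b Hab) as [pr].
  specialize (HM1 b pr Hab HM1b). specialize (HM2 b pr Hab HM2b).
  assert (Rabs (l1 - l2) <= Rabs (RiemannInt pr - l1) + Rabs (RiemannInt pr - l2)).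
  { replace (l1 - l2) with (-(RiemannInt pr - l1) + (RiemannInt pr - l2)) by ring.
    eapply Rle_trans; [apply Rabs_triang|]. rewrite Rabs_Ropp. lra. }
  unfold eps in *. lra.
Qed.

Lemma threshold_unique f q h1 h2 : is_threshold f q h1 -> is_threshold f q h2 -> h1 = h2.
Proof.
  intros [A1 [B1 _]] [A2 [B2 _]]. apply Rle_antisym; [apply B2 | apply B1]; auto.
Qed.

Lemma is_kappa_unique f q k1 k2 : is_kappa f q k1 -> is_kappa f q k2 -> k1 = k2.
Proof.
  intros (h1 & m1 & t1 & T1 & M1 & I1 & P1 & E1) (h2 & m2 & t2 & T2 & M2 & I2 & P2 & E2).
  rewrite (threshold_unique _ _ _ _ T1 T2) in I1.
  rewrite (improper_unique _ _ _ _ M1 M2) in E1.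
  rewrite (improper_unique _ _ _ _ I1 I2) in E1. congruence.
Qed.

Lemma kappa_eq f q k : is_kappa f q k -> kappa f q = k.
Proof.
  intros H. unfold kappa.
  apply (is_kappa_unique f q). 2: exact H.
  apply epsilon_spec. eauto.
Qed.

Lemma decay c s K : 0 < s -> 0 < K -> forall eps, 0 < eps ->
  exists M, 0 < M /\ forall y, M <= y -> K * exp (c - s * ln y) < eps.
Proof.
  intros Hs HK eps He.
  exists (exp ((c - ln (eps / (2*K))) / s)). split. apply exp_pos.
  intros y Hy.
  assert (Hy0 : 0 < y) by (eapply Rlt_le_trans; [apply exp_pos|exact Hy]).
  apply ln_le in Hy; [|apply exp_pos]. rewrite ln_exp in Hy.
  assert (c - s * ln y <= ln (eps / (2*K))).
  { apply Rmult_le_compat_l with (r := s) in Hy; [|lra].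
    replace (s * ((c - ln (eps / (2 * K))) / s)) with (c - ln (eps / (2*K))) in Hy by (field; lra). lra. }
  assert (exp (c - s * ln y) <= eps / (2*K)).
  { rewrite <- (exp_ln (eps / (2*K))). 2: apply Rdiv_lt_0_compat; lra.
    destruct (Req_dec (c - s * ln y) (ln (eps / (2*K)))) as [e|n]. rewrite e; lra.
    left; apply exp_increasing; lra. }
  apply Rmult_le_compat_l with (r := K) in H0; [|lra].
  replace (K * (eps / (2*K))) with (eps/2) in H0 by (field; lra). lra.
Qed.

Lemma gen_RInt (phi Phi g : R -> R) x0 : 0 < x0 ->
  (forall y, y < x0 -> phi y = 0) -> (forall y, x0 <= y -> phi y = g y) ->
  (forall y, 0 < y -> is_derive Phi y (g y)) -> (forall y, 0 < y -> continuous g y) ->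
  forall a b, a <= b -> is_RInt phi a b (Phi (Rmax b x0) - Phi (Rmax a x0)).
Proof.
  intros Hx0 H0 Hg HD HC.
  assert (L1 : forall a b, a <= b -> b <= x0 -> is_RInt phi a b 0).
  { intros a b Hab Hb.
    apply is_RInt_ext with (f := fun _ => 0).
    { intros x Hx. rewrite Rmin_left in Hx by lra. rewrite Rmax_right in Hx by lra.
      rewrite H0; lra. }
    pose proof (is_RInt_const (V:=R_NormedModule) a b 0) as HH.
    replace (scal (b - a) (0:R_NormedModule)) with 0 in HH. exact HH.
    unfold scal; simpl; unfold mult; simpl; ring. }
  assert (L2 : forall a b, x0 <= a -> a <= b -> is_RInt phi a b (Phi b - Phi a)).
  { intros a b Ha Hab.
    apply is_RInt_ext with (f := g).
    { intros x Hx. rewrite Rmin_left in Hx by lra. rewrite Rmax_right in Hx by lra.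
      rewrite Hg; lra. }
    apply (is_RInt_derive Phi g).
    - intros x Hx. rewrite Rmin_left in Hx by lra. apply HD; lra.
    - intros x Hx. rewrite Rmin_left in Hx by lra. apply HC; lra. }
  intros a b Hab.
  destruct (Rle_dec b x0) as [Hb|Hb].
  { rewrite !Rmax_right by lra. replace (Phi x0 - Phi x0) with 0 by ring. apply L1; lra. }
  destruct (Rle_dec x0 a) as [Ha|Ha].
  { rewrite !Rmax_left by lra. apply L2; lra. }
  rewrite Rmax_left by lra. rewrite Rmax_right by lra.
  pose proof (is_RInt_Chasles phi a x0 b 0 (Phi b - Phi x0) (L1 a x0 ltac:(lra) ltac:(lra)) (L2 x0 b ltac:(lra) ltac:(lra))) as HH.
  assert (E0: plus (0:R_NormedModule) (Phi b - Phi x0) = Phi b - Phi x0) by (unfold plus; simpl; ring).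
  rewrite E0 in HH. exact HH.
Qed.

Definition E (al x0 y : R) := exp (al * (ln x0 - ln y)).
Definition Sc al x0 x := E al x0 (Rmax x x0).
Definition Tc al x0 x := al / (al - 1) * Rmax x x0 * E al x0 (Rmax x x0).

Lemma pd_form al x0 y : 0 < x0 -> x0 <= y ->
  pareto_density al x0 y = al / y * E al x0 y.
Proof.
  intros Hx Hy. unfold pareto_density, E, Rpower.
  destruct (Rle_dec x0 y); [|lra].
  replace (- (al + 1) * ln y) with ((-(al * ln y)) + - ln y) by ring.
  rewrite exp_plus, exp_Ropp with (x := ln y), exp_ln by lra.
  replace (al * (ln x0 - ln y)) with (al * ln x0 + - (al * ln y)) by ring.
  rewrite exp_plus. field. lra.
Qed.

Lemma pd_zero al x0 y : y < x0 -> pareto_density al x0 y = 0.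
Proof. intros H. unfold pareto_density. destruct (Rle_dec x0 y); [lra|auto]. Qed.

Lemma RInt_S al x0 : 0 < x0 -> forall a b, a <= b ->
  is_RInt (pareto_density al x0) a b (Sc al x0 a - Sc al x0 b).
Proof.
  intros Hx a b Hab.
  assert (HH := gen_RInt (pareto_density al x0) (fun y => - E al x0 y) (fun y => al / y * E al x0 y) x0 Hx
    (pd_zero al x0) (fun y H => pd_form al x0 y Hx H)).
  cbv beta in HH.
  replace (Sc al x0 a - Sc al x0 b) with (- E al x0 (Rmax b x0) - - E al x0 (Rmax a x0)) by (unfold Sc; ring).
  apply HH; auto.
  - intros y Hy. unfold E. auto_derive. lra. unfold Rminus; field; lra.
  - intros y Hy. apply (@ex_derive_continuous R_AbsRing R_NormedModule). unfold E. auto_derive. lra.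
Qed.

Lemma RInt_T al x0 : 0 < x0 -> 1 < al -> forall a b, a <= b ->
  is_RInt (fun y => y * pareto_density al x0 y) a b (Tc al x0 a - Tc al x0 b).
Proof.
  intros Hx Hal a b Hab.
  assert (HH := gen_RInt (fun y => y * pareto_density al x0 y) (fun y => - (al / (al - 1) * y * E al x0 y))
     (fun y => al * E al x0 y) x0 Hx).
  cbv beta in HH.
  replace (Tc al x0 a - Tc al x0 b) with
    (- (al / (al - 1) * Rmax b x0 * E al x0 (Rmax b x0)) - - (al / (al - 1) * Rmax a x0 * E al x0 (Rmax a x0))) by (unfold Tc; ring).
  apply HH; auto.
  - intros y Hy; rewrite pd_zero; auto; ring.
  - intros y Hy; rewrite pd_form; auto. field. lra.
  - intros y Hy. unfold E. auto_derive. lra. unfold Rminus; field; lra.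
  - intros y Hy. apply (@ex_derive_continuous R_AbsRing R_NormedModule). unfold E. auto_derive. lra.
Qed.

Lemma E_le1 al x0 y : 0 < al -> 0 < x0 -> x0 <= y -> E al x0 y <= 1.
Proof.
  intros Ha Hx Hy. unfold E. rewrite <- exp_0.
  assert (ln x0 <= ln y) by (apply ln_le; lra).
  destruct (Req_dec (al * (ln x0 - ln y)) 0) as [e|n]. rewrite e; lra.
  left; apply exp_increasing. nra.
Qed.

Lemma pd_nonneg al x0 y : 0 < al -> 0 <= pareto_density al x0 y.
Proof.
  intros Ha. unfold pareto_density, Rpower. destruct (Rle_dec x0 y); [|lra].
  assert (H1 := exp_pos (al * ln x0)). assert (H2 := exp_pos (- (al + 1) * ln y)).
  apply Rmult_le_pos; [|lra]. apply Rmult_le_pos; lra.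
Qed.

Lemma imp_S al x0 : 0 < x0 -> 0 < al -> forall a,
  improper_int (pareto_density al x0) a (Sc al x0 a).
Proof.
  intros Hx Ha a. apply improper_of with (F := fun b => Sc al x0 a - Sc al x0 b).
  - intros b Hab. apply RInt_S; auto.
  - intros eps He. destruct (decay (al * ln x0) al 1 Ha Rlt_0_1 eps He) as [M [HM HMb]].
    exists (Rmax M x0). intros b Hb.
    assert (Hb1 : M <= b) by (eapply Rle_trans; [apply Rmax_l|exact Hb]).
    assert (Hb2 : x0 <= b) by (eapply Rle_trans; [apply Rmax_r|exact Hb]).
    specialize (HMb b Hb1). cbv beta.
    assert (Sc al x0 b = exp (al * ln x0 - al * ln b)) as ->.
    { unfold Sc, E. rewrite Rmax_left by lra. f_equal; ring. }
    replace (Sc al x0 a - exp (al * ln x0 - al * ln b) - Sc al x0 a) with (- exp (al * ln x0 - al * ln b)) by ring.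
    rewrite Rabs_Ropp, Rabs_pos_eq by (left; apply exp_pos). lra.
Qed.

Lemma imp_T al x0 : 0 < x0 -> 1 < al -> forall a,
  improper_int (fun y => y * pareto_density al x0 y) a (Tc al x0 a).
Proof.
  intros Hx Ha a. apply improper_of with (F := fun b => Tc al x0 a - Tc al x0 b).
  - intros b Hab. apply RInt_T; auto.
  - intros eps He.
    assert (HK : 0 < al / (al - 1)) by (apply Rdiv_lt_0_compat; lra).
    destruct (decay (al * ln x0) (al - 1) (al / (al - 1)) ltac:(lra) HK eps He) as [M [HM HMb]].
    exists (Rmax M x0). intros b Hb.
    assert (Hb1 : M <= b) by (eapply Rle_trans; [apply Rmax_l|exact Hb]).
    assert (Hb2 : x0 <= b) by (eapply Rle_trans; [apply Rmax_r|exact Hb]).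
    specialize (HMb b Hb1). cbv beta.
    assert (Tc al x0 b = al / (al - 1) * exp (al * ln x0 - (al - 1) * ln b)) as ->.
    { unfold Tc, E. rewrite Rmax_left by lra. replace (al * ln x0 - (al - 1) * ln b) with (ln b + al * (ln x0 - ln b)) by ring.
        rewrite exp_plus, exp_ln by lra. ring. }
    replace (Tc al x0 a - al / (al - 1) * exp (al * ln x0 - (al - 1) * ln b) - Tc al x0 a)
      with (- (al / (al - 1) * exp (al * ln x0 - (al - 1) * ln b))) by ring.
    rewrite Rabs_Ropp, Rabs_pos_eq. lra.
    apply Rmult_le_pos; [lra| left; apply exp_pos].
Qed.

Lemma key_ineq al x0 : 0 < x0 -> 1 < al -> forall x h,
  Tc al x0 x - Tc al x0 h >= x * (Sc al x0 x - Sc al x0 h).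
Proof.
  intros Hx Ha x h.
  assert (Hs : forall a b, a <= b -> is_RInt (fun y => scal x (pareto_density al x0 y)) a b (scal x (Sc al x0 a - Sc al x0 b)))
    by (intros; apply (is_RInt_scal (V:=R_NormedModule)); apply RInt_S; auto).
  destruct (Rle_dec x h) as [H|H].
  - apply Rle_ge. apply (is_RInt_le (fun y => scal x (pareto_density al x0 y)) (fun y => y * pareto_density al x0 y) x h); auto.
    apply RInt_T; auto.
    intros y Hy. unfold scal; simpl; unfold mult; simpl.
    apply Rmult_le_compat_r. apply pd_nonneg; lra. lra.
  - assert (h <= x) by lra.
    assert (Tc al x0 h - Tc al x0 x <= x * (Sc al x0 h - Sc al x0 x)).
    { apply (is_RInt_le (fun y => y * pareto_density al x0 y) (fun y => scal x (pareto_density al x0 y)) h x); auto.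
      apply RInt_T; auto.
      intros y Hy. unfold scal; simpl; unfold mult; simpl.
      apply Rmult_le_compat_r. apply pd_nonneg; lra. lra. }
    lra.
Qed.

Lemma lip_T al x0 : 0 < x0 -> 1 < al -> forall x h, x <= h ->
  Tc al x0 x - Tc al x0 h <= al * (h - x).
Proof.
  intros Hx Ha x h Hxh.
  apply (is_RInt_le (fun y => y * pareto_density al x0 y) (fun _ => al) x h); auto.
  apply RInt_T; auto.
  pose proof (is_RInt_const (V:=R_NormedModule) x h al) as HH.
  replace (al * (h - x)) with (scal (h - x) (al : R_NormedModule)). exact HH.
  unfold scal; simpl; unfold mult; simpl; ring.
  intros y Hy. destruct (Rlt_dec y x0) as [Hl|Hl].
  - rewrite pd_zero by auto. lra.
  - rewrite pd_form by lra. replace (y * (al / y * E al x0 y)) with (al * E al x0 y) by (field; lra).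
    assert (E al x0 y <= 1) by (apply E_le1; lra). nra.
Qed.

Lemma exceed_char f q S : (forall x, improper_int f x (S x)) ->
  forall x, exceed_set f q x <-> 0 <= x /\ S x <= q.
Proof.
  intros HS x. split.
  - intros [H0 [p [Hp Hq]]]. rewrite (improper_unique _ _ _ _ (HS x) Hp). auto.
  - intros [H0 H1]. split; auto. exists (S x); auto.
Qed.

Lemma threshold_of f q S h : (forall x, improper_int f x (S x)) ->
  0 <= h -> S h <= q -> (forall x, 0 <= x -> S x <= q -> h <= x) -> is_threshold f q h.
Proof.
  intros HS H0 H1 H2. split; [|split].
  - intros x Hx. apply (exceed_char f q S HS) in Hx. apply H2; tauto.
  - intros l Hl. apply Hl. apply (exceed_char f q S HS); auto.
  - exists h. apply (exceed_char f q S HS); auto.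
Qed.

Definition hs al x0 q := exp (ln x0 - ln q / al).

Lemma pareto_main al x0 q : 1 < al -> 0 < x0 -> 0 < q < 1 ->
  0 <= hs al x0 q /\ Sc al x0 (hs al x0 q) = q /\
  (forall x, 0 <= x -> Sc al x0 x <= q -> hs al x0 q <= x) /\
  Tc al x0 0 = al / (al - 1) * x0 /\
  Tc al x0 (hs al x0 q) / Tc al x0 0 = Rpower q ((al - 1) / al).
Proof.
  intros Ha Hx Hq.
  assert (lnq : ln q < 0) by (rewrite <- ln_1; apply ln_increasing; lra).
  assert (Hlh : ln (hs al x0 q) = ln x0 - ln q / al) by (unfold hs; apply ln_exp).
  assert (Hx0h : x0 < hs al x0 q).
  { unfold hs. rewrite <- (exp_ln x0) at 1 by lra. apply exp_increasing.
    assert (0 < - ln q / al) by (apply Rdiv_lt_0_compat; lra).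
    unfold Rdiv in *. lra. }
  assert (Hhpos : 0 < hs al x0 q) by apply exp_pos.
  assert (HSh : Sc al x0 (hs al x0 q) = q).
  { unfold Sc, E. rewrite Rmax_left by lra. rewrite Hlh.
    replace (al * (ln x0 - (ln x0 - ln q / al))) with (ln q) by (field; lra).
    apply exp_ln; lra. }
  assert (HT0 : Tc al x0 0 = al / (al - 1) * x0).
  { unfold Tc, E. rewrite Rmax_right by lra. replace (al * (ln x0 - ln x0)) with 0 by ring.
    rewrite exp_0; ring. }
  split; [lra|]. split; auto. split; [|split; auto].
  - intros x Hx0 HSx. destruct (Rle_dec (hs al x0 q) x) as [|Hn]; auto. exfalso.
    set (y := Rmax x x0).
    assert (Hy0 : x0 <= y) by apply Rmax_r.
    assert (Hyh : y < hs al x0 q) by (unfold y; apply Rmax_lub_lt; lra).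
    assert (ln y < ln (hs al x0 q)) by (apply ln_increasing; lra).
    assert (q < Sc al x0 x).
    { unfold Sc, E. fold y. rewrite <- (exp_ln q) at 1 by lra. apply exp_increasing.
      rewrite Hlh in H.
      apply Rmult_lt_compat_l with (r := al) in H; [|lra].
      replace (al * (ln x0 - ln q / al)) with (al * ln x0 - ln q) in H by (field; lra). lra. }
    lra.
  - rewrite HT0. unfold Tc. fold (Sc al x0 (hs al x0 q)). rewrite HSh.
    rewrite Rmax_left by lra. unfold hs, Rpower.
    replace (al / (al - 1) * exp (ln x0 - ln q / al) * q / (al / (al - 1) * x0))
      with (exp (ln x0 - ln q / al) * q / x0) by (field; lra).
    replace (ln x0 - ln q / al) with (ln x0 + (- ln q / al)) by (unfold Rdiv; ring).
    rewrite exp_plus, exp_ln by lra.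
    replace ((al - 1) / al * ln q) with (- ln q / al + ln q) by (field; lra).
    rewrite exp_plus, exp_ln by lra. field; lra.
Qed.

Lemma part_i al x0 q : 1 < al -> 0 < x0 -> 0 < q < 1 ->
  is_kappa (pareto_density al x0) q (Rpower q ((al - 1) / al)).
Proof.
  intros Ha Hx Hq.
  destruct (pareto_main al x0 q Ha Hx Hq) as (H0 & H1 & H2 & H3 & H4).
  exists (hs al x0 q), (Tc al x0 0), (Tc al x0 (hs al x0 q)).
  split; [|split; [|split; [|split]]].
  - apply threshold_of with (S := Sc al x0); auto. apply imp_S; lra. lra.
  - apply imp_T; auto.
  - apply imp_T; auto.
  - rewrite H3. apply Rmult_lt_0_compat; auto. apply Rdiv_lt_0_compat; lra.
  - auto.
Qed.

Lemma sumN_ext m f g : (forall i, (i < m)%nat -> f i = g i) -> sumN m f = sumN m g.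
Proof. induction m; simpl; intros H; auto. rewrite IHm, H; auto; intros; apply H; lia. Qed.
Lemma sumN_le m f g : (forall i, (i < m)%nat -> f i <= g i) -> sumN m f <= sumN m g.
Proof. induction m; simpl; intros H; [lra|]. assert (f m <= g m) by (apply H; lia).
  assert (sumN m f <= sumN m g) by (apply IHm; intros; apply H; lia). lra. Qed.
Lemma sumN_lt m f g : (0 < m)%nat -> (forall i, (i < m)%nat -> f i < g i) -> sumN m f < sumN m g.
Proof. destruct m as [|m]; [lia|]. intros _ H. simpl.
  assert (f m < g m) by (apply H; lia).
  assert (sumN m f <= sumN m g) by (apply sumN_le; intros; left; apply H; lia). lra. Qed.
Lemma sumN_plus m f g : sumN m (fun i => f i + g i) = sumN m f + sumN m g.
Proof. induction m; simpl; [ring|]. rewrite IHm; ring. Qed.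
Lemma sumN_scal m c f : sumN m (fun i => c * f i) = c * sumN m f.
Proof. induction m; simpl; [ring|]. rewrite IHm; ring. Qed.
Lemma sumN_scalr m c f : sumN m (fun i => f i * c) = sumN m f * c.
Proof. induction m; simpl; [ring|]. rewrite IHm; ring. Qed.
Lemma sumN_minus m f g : sumN m (fun i => f i - g i) = sumN m f - sumN m g.
Proof. induction m; simpl; [ring|]. rewrite IHm; ring. Qed.

Lemma improper_lin f g a l1 l2 c : improper_int f a l1 -> improper_int g a l2 ->
  improper_int (fun y => f y + c * g y) a (l1 + c * l2).
Proof.
  intros [I1 L1] [I2 L2]. split.
  - intros b Hb. destruct (I1 b Hb) as [p1]. destruct (I2 b Hb) as [p2].
    constructor. apply RiemannInt_P10; auto.
  - intros eps He.
    assert (Hc : 0 < Rabs c + 1) by (pose proof (Rabs_pos c); lra).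
    destruct (L1 (eps/2) ltac:(lra)) as [M1 H1].
    destruct (L2 (eps/2/(Rabs c + 1))) as [M2 H2]. apply Rdiv_lt_0_compat; lra.
    exists (Rmax M1 M2). intros b pr Hab HM.
    destruct (I1 b Hab) as [p1]. destruct (I2 b Hab) as [p2].
    rewrite (RiemannInt_P13 p1 p2 pr).
    specialize (H1 b p1 Hab (Rle_trans _ _ _ (Rmax_l _ _) HM)).
    specialize (H2 b p2 Hab (Rle_trans _ _ _ (Rmax_r _ _) HM)).
    replace (RiemannInt p1 + c * RiemannInt p2 - (l1 + c * l2)) with
      ((RiemannInt p1 - l1) + c * (RiemannInt p2 - l2)) by ring.
    eapply Rle_lt_trans. apply Rabs_triang. rewrite Rabs_mult.
    assert (Rabs c * Rabs (RiemannInt p2 - l2) <= (Rabs c + 1) * (eps / 2 / (Rabs c + 1))).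
    { apply Rmult_le_compat; try apply Rabs_pos; lra. }
    replace ((Rabs c + 1) * (eps / 2 / (Rabs c + 1))) with (eps/2) in H by (field; lra). lra.
Qed.

Lemma improper_zero a : improper_int (fun _ => 0) a 0.
Proof.
  apply improper_of with (F := fun _ => 0).
  - intros b Hb. pose proof (is_RInt_const (V:=R_NormedModule) a b 0) as HH.
    replace (scal (b - a) (0:R_NormedModule)) with 0 in HH. exact HH.
    unfold scal; simpl; unfold mult; simpl; ring.
  - intros eps He. exists 0. intros. rewrite Rminus_0_r, Rabs_R0; auto.
Qed.

Lemma improper_sum m (w : nat -> R) (F : nat -> R -> R) (l : nat -> R) a :
  (forall i, (i < m)%nat -> improper_int (F i) a (l i)) ->
  improper_int (fun y => sumN m (fun i => w i * F i y)) a (sumN m (fun i => w i * l i)).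
Proof.
  induction m; intros H; simpl.
  - apply improper_zero.
  - apply (improper_lin (fun y => sumN m (fun i => w i * F i y)) (F m)).
    apply IHm; intros; apply H; lia. apply H; lia.
Qed.

Lemma exp_tangent u z : exp u >= exp z * (1 + u - z).
Proof.
  replace (exp u) with (exp z * exp (u - z)) by (rewrite <- exp_plus; f_equal; ring).
  apply Rle_ge, Rmult_le_compat_l. left; apply exp_pos.
  pose proof (exp_ineq1_le (u - z)). lra.
Qed.

Lemma Rpower_form q a : 0 < q -> 0 < a -> Rpower q ((a - 1) / a) = exp (ln q - ln q / a).
Proof. intros. unfold Rpower. f_equal. field. lra. Qed.

Lemma part_ii_ineq q a1 a2 t : 0 < q < 1 -> 1 < a1 -> 1 < a2 -> a1 <> a2 -> 0 < t < 1 ->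
  Rpower q ((t * a1 + (1 - t) * a2 - 1) / (t * a1 + (1 - t) * a2))
  < t * Rpower q ((a1 - 1) / a1) + (1 - t) * Rpower q ((a2 - 1) / a2).
Proof.
  intros Hq H1 H2 Hne Ht.
  set (A := t * a1 + (1 - t) * a2).
  assert (HA : 0 < A) by (unfold A; nra).
  rewrite !Rpower_form by lra.
  assert (lnq : ln q < 0) by (rewrite <- ln_1; apply ln_increasing; lra).
  set (c := ln q) in *.
  set (u1 := c - c / a1). set (u2 := c - c / a2). set (z := t * u1 + (1 - t) * u2).
  assert (Hinv : t / a1 + (1 - t) / a2 - 1 / A = t * (1 - t) * (a1 - a2) ^ 2 / (a1 * a2 * A))
    by (unfold A in *; field; lra).
  assert (Hpos : 0 < t * (1 - t) * (a1 - a2) ^ 2 / (a1 * a2 * A)).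
  { apply Rdiv_lt_0_compat. apply Rmult_lt_0_compat. nra.
    assert (a1 - a2 <> 0) by lra. pose proof (pow2_gt_0 _ H). nra.
    apply Rmult_lt_0_compat; nra. }
  assert (c - c / A < z).
  { unfold z, u1, u2.
    replace (t * (c - c / a1) + (1 - t) * (c - c / a2)) with (c - c * (t / a1 + (1 - t) / a2)) by (field; lra).
    replace (c / A) with (c * (1 / A)) by (field; lra). nra. }
  apply Rlt_le_trans with (exp z). apply exp_increasing; auto.
  pose proof (exp_tangent u1 z). pose proof (exp_tangent u2 z).
  assert (t * exp u1 + (1 - t) * exp u2 >= exp z) .
  { assert (t * exp u1 >= t * (exp z * (1 + u1 - z))) by (apply Rle_ge, Rmult_le_compat_l; lra).
    assert ((1 - t) * exp u2 >= (1 - t) * (exp z * (1 + u2 - z))) by (apply Rle_ge, Rmult_le_compat_l; lra).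
    assert (t * (exp z * (1 + u1 - z)) + (1 - t) * (exp z * (1 + u2 - z)) = exp z) by (unfold z; ring).
    lra. }
  unfold u1, u2 in H3. lra.
Qed.

Lemma jensen q m (w al : nat -> R) : 0 < q < 1 ->
  (forall i, (i < m)%nat -> 1 < al i) -> (forall i, (i < m)%nat -> 0 < w i) -> sumN m w = 1 ->
  let ab := sumN m (fun i => w i * al i) in
  sumN m (fun i => w i * Rpower q ((al i - 1) / al i)) >= Rpower q ((ab - 1) / ab).
Proof.
  intros Hq Ha Hw Hs ab.
  assert (Hm : (0 < m)%nat) by (destruct m; [simpl in Hs; lra| lia]).
  assert (Hab : 1 < ab).
  { unfold ab. rewrite <- Hs. apply sumN_lt; auto. intros i Hi. specialize (Ha i Hi). specialize (Hw i Hi). nra. }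
  assert (lnq : ln q < 0) by (rewrite <- ln_1; apply ln_increasing; lra).
  set (c := ln q).
  rewrite (sumN_ext m _ (fun i => w i * exp (c - c / al i))).
  2:{ intros i Hi. rewrite Rpower_form; auto; [lra|]. specialize (Ha i Hi); lra. }
  rewrite Rpower_form by lra. fold c.
  assert (S1 : sumN m (fun i => w i / al i) >= 1 / ab).
  { assert (sumN m (fun i => w i * (2 / ab - al i / (ab * ab))) <= sumN m (fun i => w i / al i)).
    { apply sumN_le. intros i Hi. specialize (Ha i Hi). specialize (Hw i Hi).
      assert (1 / al i - (2 / ab - al i / (ab * ab)) = (al i - ab)^2 / (al i * ab * ab)) by (field; lra).
      assert (0 <= (al i - ab)^2 / (al i * ab * ab)).
      { apply Rdiv_le_0_compat. apply pow2_ge_0. apply Rmult_lt_0_compat; nra. }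
      replace (w i / al i) with (w i * (1 / al i)) by (field; lra). nra. }
    rewrite (sumN_ext m _ (fun i => w i * (2 / ab) - (w i * al i) * (1 / (ab * ab)))) in H
      by (intros; field; lra).
    rewrite sumN_minus, sumN_scalr, sumN_scalr in H. fold ab in H. rewrite Hs in H.
    replace (1 * (2 / ab) - ab * (1 / (ab * ab))) with (1 / ab) in H by (field; lra). lra. }
  set (z := sumN m (fun i => w i * (c - c / al i))).
  assert (Hz : z = c - c * sumN m (fun i => w i / al i)).
  { unfold z. rewrite (sumN_ext m _ (fun i => w i * c - c * (w i / al i))).
    rewrite sumN_minus, sumN_scalr, sumN_scal, Hs. ring.
    intros i Hi. specialize (Ha i Hi). field. lra. }
  assert (c - c / ab <= z).
  { rewrite Hz. replace (c / ab) with (c * (1 / ab)) by (field; lra).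
    assert (0 <= (-c) * (sumN m (fun i => w i / al i) - 1 / ab)) by (apply Rmult_le_pos; unfold c; lra). lra. }
  assert (sumN m (fun i => w i * (exp z * (1 + (c - c / al i) - z))) <= sumN m (fun i => w i * exp (c - c / al i))).
  { apply sumN_le. intros i Hi. specialize (Hw i Hi). pose proof (exp_tangent (c - c / al i) z).
    apply Rmult_le_compat_l; lra. }
  rewrite (sumN_ext m _ (fun i => w i * (exp z * (1 - z)) + exp z * (w i * (c - c / al i)))) in H0
    by (intros; ring).
  rewrite sumN_plus, sumN_scalr, sumN_scal, Hs in H0. fold z in H0.
  apply Rle_ge. eapply Rle_trans; [|exact H0].
  replace (1 * (exp z * (1 - z)) + exp z * z) with (exp z) by ring.
  destruct H as [H|H]; [left; apply exp_increasing; auto | rewrite H; lra].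
Qed.

Lemma xmin_norm_bounds a : 1 < a -> 0 < xmin_norm a < 1.
Proof. intros. unfold xmin_norm. split. apply Rdiv_lt_0_compat; lra.
  apply (Rmult_lt_reg_r a); [lra|]. field_simplify; lra. Qed.

Lemma part_iii_1 q m (w al : nat -> R) : 0 < q < 1 ->
  (forall i, (i < m)%nat -> 1 < al i) -> (forall i, (i < m)%nat -> 0 < w i) -> sumN m w = 1 ->
  kappa (mixture_density m w al) q
   >= sumN m (fun i => w i * kappa (pareto_density (al i) (xmin_norm (al i))) q).
Proof.
  intros Hq Ha Hw Hs.
  set (xi := fun i => xmin_norm (al i)).
  assert (Hxi : forall i, (i < m)%nat -> 0 < xi i < 1) by (intros; apply xmin_norm_bounds; auto).
  set (Sm := fun x => sumN m (fun i => w i * Sc (al i) (xi i) x)).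
  set (Tm := fun x => sumN m (fun i => w i * Tc (al i) (xi i) x)).
  assert (impS : forall x, improper_int (mixture_density m w al) x (Sm x)).
  { intros x. unfold mixture_density, Sm.
    apply (improper_sum m w (fun i => pareto_density (al i) (xi i)) (fun i => Sc (al i) (xi i) x)).
    intros i Hi. apply imp_S. apply Hxi; auto. specialize (Ha i Hi); lra. }
  assert (impT : forall x, improper_int (fun y => y * mixture_density m w al y) x (Tm x)).
  { intros x.
    replace (fun y => y * mixture_density m w al y) with
      (fun y => sumN m (fun i => w i * (y * pareto_density (al i) (xi i) y))).
    apply (improper_sum m w (fun i y => y * pareto_density (al i) (xi i) y) (fun i => Tc (al i) (xi i) x)).
    intros i Hi. apply imp_T; auto. apply Hxi; auto.
    apply functional_extensionality. intros y. unfold mixture_density. rewrite <- sumN_scal.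
    apply sumN_ext. intros; unfold xi; ring. }
  set (hi := fun i => hs (al i) (xi i) q).
  assert (comp : forall i, (i < m)%nat ->
    Sc (al i) (xi i) (hi i) = q /\ Tc (al i) (xi i) 0 = 1 /\
    Tc (al i) (xi i) (hi i) = kappa (pareto_density (al i) (xmin_norm (al i))) q).
  { intros i Hi. specialize (Ha i Hi). destruct (Hxi i Hi) as [Hx1 Hx2].
    destruct (pareto_main (al i) (xi i) q Ha Hx1 Hq) as (H0 & H1 & H2 & H3 & H4).
    assert (T0 : Tc (al i) (xi i) 0 = 1) by (rewrite H3; unfold xi, xmin_norm; field; lra).
    split; auto. split; auto.
    rewrite (kappa_eq _ _ _ (part_i (al i) (xmin_norm (al i)) q Ha Hx1 Hq)).
    rewrite <- H4, T0. unfold hi, xi. field. }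
  set (K := sumN m (fun i => w i * kappa (pareto_density (al i) (xmin_norm (al i))) q)).
  assert (key : forall x, Tm x - K >= x * (Sm x - q)).
  { intros x. unfold Tm, K, Sm.
    rewrite <- sumN_minus.
    replace (sumN m (fun i => w i * Sc (al i) (xi i) x) - q) with
      (sumN m (fun i => w i * (Sc (al i) (xi i) x - Sc (al i) (xi i) (hi i)))).
    2:{ rewrite (sumN_ext m _ (fun i => w i * Sc (al i) (xi i) x - w i * q)).
        rewrite sumN_minus, sumN_scalr, Hs. ring.
        intros i Hi. destruct (comp i Hi) as [-> _]. ring. }
    rewrite <- sumN_scal. apply Rle_ge, sumN_le. intros i Hi.
    destruct (comp i Hi) as (_ & _ & <-). destruct (Hxi i Hi).
    pose proof (key_ineq (al i) (xi i) ltac:(lra) (Ha i Hi) x (hi i)).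
    specialize (Hw i Hi). nra. }
  set (ab := sumN m (fun i => w i * al i)).
  assert (Hm : (0 < m)%nat) by (destruct m; [simpl in Hs; lra| lia]).
  assert (Hab : 1 < ab).
  { unfold ab. rewrite <- Hs. apply sumN_lt; auto. intros i Hi. specialize (Ha i Hi). specialize (Hw i Hi). nra. }
  assert (lip : forall x h, x <= h -> Tm x - Tm h <= ab * (h - x)).
  { intros x h Hxh. unfold Tm, ab. rewrite <- sumN_minus, <- sumN_scalr.
    apply sumN_le. intros i Hi. destruct (Hxi i Hi).
    pose proof (lip_T (al i) (xi i) ltac:(lra) (Ha i Hi) x h Hxh). specialize (Hw i Hi). nra. }
  assert (T0 : Tm 0 = 1).
  { unfold Tm. rewrite <- Hs. apply sumN_ext. intros i Hi. destruct (comp i Hi) as (_ & -> & _). ring. }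
  assert (lnq : ln q < 0) by (rewrite <- ln_1; apply ln_increasing; lra).
  assert (Hiq : 1 < / q).
  { apply (Rmult_lt_reg_r q); [lra|]. rewrite Rinv_l by lra. lra. }
  assert (Sq : Sm (/ q) <= q).
  { unfold Sm. apply Rle_trans with (sumN m (fun i => w i * q)); [| rewrite sumN_scalr, Hs; lra].
    apply sumN_le. intros i Hi. destruct (Hxi i Hi). specialize (Ha i Hi). specialize (Hw i Hi).
    apply Rmult_le_compat_l; [lra|].
    unfold Sc, E. rewrite Rmax_left by lra. rewrite ln_Rinv by lra.
    rewrite <- (exp_ln q) at 2 by lra. left; apply exp_increasing.
    assert (ln (xi i) < 0) by (rewrite <- ln_1; apply ln_increasing; lra). nra. }
  assert (exq : exceed_set (mixture_density m w al) q (/ q)).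
  { apply (exceed_char _ _ Sm impS). split; auto. lra. }
  set (Ep := fun l => forall x, exceed_set (mixture_density m w al) q x -> l <= x).
  assert (Hb : bound Ep) by (exists (/ q); intros l Hl; apply Hl; auto).
  assert (Hne : exists x, Ep x).
  { exists 0. intros x [Hx _]. auto. }
  destruct (completeness Ep Hb Hne) as [h [Hub Hlub]].
  assert (Hh0 : 0 <= h) by (apply Hub; intros x [Hx _]; auto).
  assert (thr : is_threshold (mixture_density m w al) q h).
  { split; [|split].
    - intros x Hx. apply Hlub. intros l Hl. apply Hl; auto.
    - intros l Hl. apply Hub. exact Hl.
    - exists (/ q); auto. }
  assert (kap : kappa (mixture_density m w al) q = Tm h).
  { apply kappa_eq. exists h, (Tm 0), (Tm h). split; auto. split; auto. split; auto.
    split. lra. rewrite T0. field. }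
  rewrite kap. fold K.
  assert (notex : forall x, 0 <= x < h -> q < Sm x).
  { intros x Hx. destruct (Rlt_le_dec q (Sm x)) as [|Hle]; auto. exfalso.
    assert (exceed_set (mixture_density m w al) q x) by (apply (exceed_char _ _ Sm impS); split; lra).
    assert (h <= x) by (apply Hlub; intros l Hl; apply Hl; auto). lra. }
  destruct (Req_dec h 0) as [e|ne].
  { rewrite e. pose proof (key 0). lra. }
  destruct (Rle_lt_dec K (Tm h)) as [|Hlt]; [lra|]. exfalso.
  set (d := Rmin (h / 2) ((K - Tm h) / (2 * ab))).
  assert (Hd1 : d <= h / 2) by apply Rmin_l.
  assert (Hd2 : d <= (K - Tm h) / (2 * ab)) by apply Rmin_r.
  assert (Hd0 : 0 < d).
  { unfold d. apply Rmin_glb_lt. lra. apply Rdiv_lt_0_compat; lra. }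
  assert (Hx : 0 <= h - d < h) by lra.
  pose proof (notex _ Hx). pose proof (key (h - d)).
  assert (K <= Tm (h - d)) by (assert (0 <= (h - d) * (Sm (h - d) - q)) by (apply Rmult_le_pos; lra); lra).
  pose proof (lip (h - d) h ltac:(lra)).
  assert (ab * d <= (K - Tm h) / 2).
  { apply Rmult_le_compat_l with (r := ab) in Hd2; [|lra].
    replace (ab * ((K - Tm h) / (2 * ab))) with ((K - Tm h) / 2) in Hd2 by (field; lra). lra. }
  replace (ab * (h - (h - d))) with (ab * d) in H2 by ring.
  lra.
Qed.

Theorem mainTheorem5 :
  forall q : R, 0 < q < 1 ->
  (* (i) *)
  (forall alpha xmin : R, 1 < alpha -> 0 < xmin ->
     is_kappa (pareto_density alpha xmin) q (Rpower q ((alpha - 1) / alpha)) /\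
     kappa (pareto_density alpha xmin) q = Rpower q ((alpha - 1) / alpha)) /\
  (* (ii) *)
  (forall xmin : R -> R, (forall a, 1 < a -> 0 < xmin a) ->
     forall a1 a2 t : R, 1 < a1 -> 1 < a2 -> a1 <> a2 -> 0 < t < 1 ->
       kappa (pareto_density (t * a1 + (1 - t) * a2) (xmin (t * a1 + (1 - t) * a2))) q
       < t * kappa (pareto_density a1 (xmin a1)) q
         + (1 - t) * kappa (pareto_density a2 (xmin a2)) q) /\
  (* (iii) *)
  (forall (m : nat) (alpha w : nat -> R),
     (forall i, (i < m)%nat -> 1 < alpha i) ->
     (forall i, (i < m)%nat -> 0 < w i) ->
     sumN m w = 1 ->
     let abar := sumN m (fun i => w i * alpha i) in
     kappa (mixture_density m w alpha) q
       >= sumN m (fun i => w i * kappa (pareto_density (alpha i) (xmin_norm (alpha i))) q) /\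
     sumN m (fun i => w i * kappa (pareto_density (alpha i) (xmin_norm (alpha i))) q)
       >= kappa (pareto_density abar (xmin_norm abar)) q).
Proof.
  intros q Hq. split; [|split].
  - intros al x0 Ha Hx. pose proof (part_i al x0 q Ha Hx Hq). split; auto. apply kappa_eq; auto.
  - intros xmin Hxm a1 a2 t H1 H2 Hne Ht.
    assert (HA : 1 < t * a1 + (1 - t) * a2).
    { assert (t * 1 < t * a1) by (apply Rmult_lt_compat_l; lra).
      assert ((1 - t) * 1 < (1 - t) * a2) by (apply Rmult_lt_compat_l; lra). lra. }
    rewrite (kappa_eq _ _ _ (part_i _ _ q HA (Hxm _ HA) Hq)).
    rewrite (kappa_eq _ _ _ (part_i _ _ q H1 (Hxm _ H1) Hq)).
    rewrite (kappa_eq _ _ _ (part_i _ _ q H2 (Hxm _ H2) Hq)).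
    apply part_ii_ineq; auto.
  - intros m al w Ha Hw Hs abar. split.
    + apply part_iii_1; auto.
    + assert (Hm : (0 < m)%nat) by (destruct m; [simpl in Hs; lra| lia]).
      assert (Hab : 1 < abar).
      { unfold abar. rewrite <- Hs. apply sumN_lt; auto. intros i Hi. specialize (Ha i Hi). specialize (Hw i Hi). nra. }
      rewrite (kappa_eq _ _ _ (part_i _ _ q Hab (proj1 (xmin_norm_bounds _ Hab)) Hq)).
      rewrite (sumN_ext m _ (fun i => w i * Rpower q ((al i - 1) / al i))).
      apply (jensen q m w al); auto.
      intros i Hi. rewrite (kappa_eq _ _ _ (part_i _ _ q (Ha i Hi) (proj1 (xmin_norm_bounds _ (Ha i Hi))) Hq)). auto.
Qed.
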